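(* Let $(X,d_X)$ be a compact geodesic metric space, $r\in X$, $d=d_X(r,\cdot)$, and let $(G,d_G)$ be either the metric Reeb graph of $d$ or the metric $\alpha$-Reeb graph of $d$, assumed to be a finite graph, with quotient map $\pi:X\to G$. Then $\pi$ is $1$-Lipschitz: for all $x,y\in X$, $d_G(\pi(x),\pi(y))\le d_X(x,y)$.
   Context: Reeb graph: for $x,y\in X$ set $x\sim y$ iff $d(x)=d(y)$ and $x,y$ lie in the same path-connected component of $d^{-1}(d(x))$; $G=X/\sim$, with quotient map $\pi:X\to G$. $\alpha$-Reeb graph: given $\alpha>0$ and a covering $\mathcal I=\{I_i\}$ of the range of $d$ by open intervals of length at most $\alpha$, let $\sim_\alpha$ be the transitive closure of the relation ''$d(x)=d(y)$ and $x,y$ lie in the same path-connected component of $d^{-1}(I_i)$ for some $i$''; $G=X/\sim_\alpha$. In both cases $d$ induces $d_*:G\to\mathbb R_+$ with $d=d_*\circ\pi$. Metric structure (assuming $G$ is a finite topological graph): the vertex set $V$ consists of the points of degree $\neq 2$, the local maxima of $d_*$, and $\pi(r)$; the edges are the connected components of $G\setminus V$. Each edge is given length equal to the absolute difference of $d_*$ at its endpoints, the distance between two points $p,p'$ of the same edge being $|d_*(p)-d_*(p')|$; $d_G$ is the resulting metric-graph metric. *)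

(* Defs.v *)
From Stdlib Require Import Reals List Relations.
From Coquelicot Require Import Coquelicot.
Open Scope R_scope.
Set Implicit Arguments.

Section Defs.
Variable X : Type.
Variable dX : X -> X -> R.
Implicit Types (I : Type).

Definition is_metric : Prop :=
  (forall x y, 0 <= dX x y) /\
  (forall x y, dX x y = 0 <-> x = y) /\
  (forall x y, dX x y = dX y x) /\
  (forall x y z, dX x z <= dX x y + dX y z).

Definition openX (U : X -> Prop) : Prop :=
  forall x, U x -> exists eps, 0 < eps /\ forall y, dX x y < eps -> U y.

Definition compactX : Prop :=
  forall (I : Type) (U : I -> X -> Prop),
    (forall i, openX (U i)) -> (forall x, exists i, U i x) ->
    exists l : list I, forall x, exists i, In i l /\ U i x.

Definition geodesicX : Prop :=
  forall x y, exists g : R -> X, g 0 = x /\ g (dX x y) = y /\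
    forall s t, 0 <= s <= dX x y -> 0 <= t <= dX x y ->
      dX (g s) (g t) = Rabs (s - t).

(* continuous path [0,1] -> X (only the values on [0,1] matter) *)
Definition pathX (g : R -> X) : Prop :=
  forall t, 0 <= t <= 1 -> forall eps, 0 < eps -> exists delta, 0 < delta /\
    forall s, 0 <= s <= 1 -> Rabs (s - t) < delta -> dX (g s) (g t) < eps.

Definition same_path_comp (P : X -> Prop) (x y : X) : Prop :=
  exists g : R -> X, pathX g /\ g 0 = x /\ g 1 = y /\
    forall t, 0 <= t <= 1 -> P (g t).

Definition reeb_rel (d : X -> R) (x y : X) : Prop :=
  d x = d y /\ same_path_comp (fun z => d z = d x) x y.

Definition alpha_cover (d : X -> R) (alpha : R) (I : Type) (a b : I -> R) : Prop :=
  (forall i, b i - a i <= alpha) /\ (forall x, exists i, a i < d x < b i).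

Definition alpha_base (d : X -> R) (I : Type) (a b : I -> R) (x y : X) : Prop :=
  d x = d y /\ exists i, same_path_comp (fun z => a i < d z < b i) x y.

Definition alpha_rel (d : X -> R) (I : Type) (a b : I -> R) : X -> X -> Prop :=
  clos_refl_trans X (alpha_base d a b).

Variable G : Type.
Variable pi : X -> G.

Definition openG (U : G -> Prop) : Prop := openX (fun x => U (pi x)).

Definition closureG (C : G -> Prop) (p : G) : Prop :=
  forall U, openG U -> U p -> exists q, U q /\ C q.

Definition connectedG (S : G -> Prop) : Prop :=
  ~ exists U W, openG U /\ openG W /\
      (forall p, S p -> U p \/ W p) /\
      (exists p, S p /\ U p) /\ (exists p, S p /\ W p) /\
      (forall p, S p -> U p -> W p -> False).

Definition componentG (A C : G -> Prop) : Prop :=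
  (exists p, C p) /\ (forall p, C p -> A p) /\ connectedG C /\
  (forall C', (forall p, C p -> C' p) -> (forall p, C' p -> A p) ->
     connectedG C' -> forall p, C' p -> C p).

Definition relopen01 (U : R -> Prop) : Prop :=
  forall t, 0 <= t <= 1 -> U t -> exists delta, 0 < delta /\
    forall s, 0 <= s <= 1 -> Rabs (s - t) < delta -> U s.

(* G (with the quotient topology) is a finite topological graph:
   finitely many vertices V0 and m edges E j : [0,1] -> G (j < m), such that
   G is the CW complex they form (cells disjoint, covering, CW topology). *)
Definition finite_graph (V0 : list G) (m : nat) (E : nat -> R -> G) : Prop :=
  (forall j, (j < m)%nat -> In (E j 0) V0 /\ In (E j 1) V0) /\
  (forall j t, (j < m)%nat -> 0 < t < 1 -> ~ In (E j t) V0) /\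
  (forall p, ~ In p V0 -> exists j t, (j < m)%nat /\ 0 < t < 1 /\ E j t = p) /\
  (forall j j' t t', (j < m)%nat -> (j' < m)%nat -> 0 < t < 1 -> 0 < t' < 1 ->
     E j t = E j' t' -> j = j' /\ t = t') /\
  (forall U, openG U <-> forall j, (j < m)%nat -> relopen01 (fun t => U (E j t))).

Definition edge_end (E : nat -> R -> G) (j : nat) (s : bool) : G :=
  E j (if s then 1 else 0).

Definition degree2 (V0 : list G) (m : nat) (E : nat -> R -> G) (p : G) : Prop :=
  ~ In p V0 \/
  exists j1 s1 j2 s2, (j1 < m)%nat /\ (j2 < m)%nat /\ (j1, s1) <> (j2, s2) /\
    edge_end E j1 s1 = p /\ edge_end E j2 s2 = p /\
    forall j s, (j < m)%nat -> edge_end E j s = p -> (j, s) = (j1, s1) \/ (j, s) = (j2, s2).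

Definition local_maxG (dstar : G -> R) (p : G) : Prop :=
  exists U, openG U /\ U p /\ forall q, U q -> dstar q <= dstar p.

Definition vertexG (V0 : list G) (m : nat) (E : nat -> R -> G)
  (dstar : G -> R) (r : X) (p : G) : Prop :=
  ~ degree2 V0 m E p \/ local_maxG dstar p \/ p = pi r.

(* p and q lie in (the closure of) a common edge = component of G \ V *)
Definition same_edge (Vs : G -> Prop) (p q : G) : Prop :=
  exists C, componentG (fun z => ~ Vs z) C /\ closureG C p /\ closureG C q.

Fixpoint chain_adm (Rel : G -> G -> Prop) (p : G) (l : list G) : Prop :=
  match l with nil => True | q :: l' => Rel p q /\ chain_adm Rel q l' end.

Fixpoint chain_len (dstar : G -> R) (p : G) (l : list G) : R :=
  match l with nil => 0 | q :: l' => Rabs (dstar p - dstar q) + chain_len dstar q l' end.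

(* metric-graph metric: infimum of lengths of chains p = p0, ..., pn = q with
   consecutive points on a common (closed) edge, where distance on an edge is
   |dstar p - dstar p'| *)
Definition dG (Vs : G -> Prop) (dstar : G -> R) (p q : G) : Rbar :=
  Glb_Rbar (fun L => exists l, chain_adm (same_edge Vs) p l /\ last l p = q /\
                               L = chain_len dstar p l).
End Defs.

(* Main.v *)
Require Import Defs.
From Stdlib Require Import Reals List Relations Lra Lia Classical.
From Coquelicot Require Import Coquelicot.
Open Scope R_scope.

Lemma interval_conn_aux (P Q : R -> Prop) (lo hi a b : R) :
  (forall s, lo < s < hi -> P s \/ Q s) ->
  (forall s, lo < s < hi -> P s -> Q s -> False) ->
  (forall s, lo < s < hi -> P s -> exists d, 0 < d /\ forall u, lo < u < hi -> Rabs (u - s) < d -> P u) ->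
  (forall s, lo < s < hi -> Q s -> exists d, 0 < d /\ forall u, lo < u < hi -> Rabs (u - s) < d -> Q u) ->
  lo < a < hi -> P a -> lo < b < hi -> Q b -> a < b -> False.
Proof.
  intros Hcov Hdis HP HQ Ha Pa Hb Qb Hab.
  set (E := fun s => a <= s <= b /\ forall u, a <= u <= s -> P u).
  assert (Hb' : bound E) by (exists b; intros s [Hs _]; lra).
  assert (He : exists s, E s).
  { exists a; split; [lra| intros u Hu; replace u with a by lra; auto]. }
  destruct (completeness E Hb' He) as [c [Hub Hlub]].
  assert (Hac : a <= c).
  { apply Hub; split; [lra| intros u Hu; replace u with a by lra; auto]. }
  assert (Hcb : c <= b) by (apply Hlub; intros s [Hs _]; lra).
  assert (Hbelow : forall u, a <= u < c -> P u).
  { intros u Hu. apply NNPP; intro nPu.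
    assert (c <= u); [|lra].
    apply Hlub. intros s [Hs Hs2].
    destruct (Rle_dec s u) as [|Hsu]; [auto|].
    exfalso; apply nPu, Hs2; lra. }
  destruct (Hcov c) as [Pc|Qc]; [lra|..].
  - assert (Hcb2 : c < b).
    { destruct (Req_dec c b) as [->|]; [|lra]. exfalso; apply (Hdis b); auto; lra. }
    destruct (HP c ltac:(lra) Pc) as [d [Hd Hd2]].
    set (s := Rmin (c + d/2) b).
    assert (Hs1 : c < s) by (unfold s; apply Rmin_glb_lt; lra).
    assert (Hs2 : s <= b) by (unfold s; apply Rmin_r).
    assert (Hs3 : s <= c + d/2) by (unfold s; apply Rmin_l).
    assert (E s).
    { split; [lra|]. intros u Hu.
      destruct (Rlt_dec u c); [apply Hbelow; lra|].
      apply Hd2; [lra|]. apply Rabs_lt_between'; lra. }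
    specialize (Hub s H); lra.
  - assert (Hca : a < c).
    { destruct (Req_dec c a) as [->|]; [|lra]. exfalso; apply (Hdis a); auto; lra. }
    destruct (HQ c ltac:(lra) Qc) as [d [Hd Hd2]].
    set (u := Rmax a (c - d/2)).
    assert (Hu1 : u < c) by (unfold u; apply Rmax_lub_lt; lra).
    assert (Hu2 : a <= u) by (unfold u; apply Rmax_l).
    assert (Hu3 : c - d/2 <= u) by (unfold u; apply Rmax_r).
    apply (Hdis u); [lra| apply Hbelow; lra|].
    apply Hd2; [lra|]. apply Rabs_lt_between'; lra.
Qed.

Lemma interval_conn (P Q : R -> Prop) (lo hi a b : R) :
  (forall s, lo < s < hi -> P s \/ Q s) ->
  (forall s, lo < s < hi -> P s -> Q s -> False) ->
  (forall s, lo < s < hi -> P s -> exists d, 0 < d /\ forall u, lo < u < hi -> Rabs (u - s) < d -> P u) ->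
  (forall s, lo < s < hi -> Q s -> exists d, 0 < d /\ forall u, lo < u < hi -> Rabs (u - s) < d -> Q u) ->
  lo < a < hi -> P a -> lo < b < hi -> Q b -> False.
Proof.
  intros H1 H2 H3 H4 Ha Pa Hb Qb.
  destruct (Rtotal_order a b) as [Hab|[<-|Hab]].
  - exact (interval_conn_aux P Q lo hi a b H1 H2 H3 H4 Ha Pa Hb Qb Hab).
  - exact (H2 a Ha Pa Qb).
  - apply (interval_conn_aux Q P lo hi b a); auto.
    + intros s Hs; destruct (H1 s Hs); auto.
    + intros s Hs q p; exact (H2 s Hs p q).
Qed.

Lemma min2 a b : 0 < a -> 0 < b -> exists e, 0 < e /\ e <= a /\ e <= b.
Proof. intros; exists (Rmin a b); split; [apply Rmin_glb_lt; auto| split; [apply Rmin_l|apply Rmin_r]]. Qed.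

Lemma min4 a b c d : 0 < a -> 0 < b -> 0 < c -> 0 < d ->
  exists e, 0 < e /\ e <= a /\ e <= b /\ e <= c /\ e <= d.
Proof.
  intros. destruct (min2 a b) as [e1 [? [? ?]]]; auto.
  destruct (min2 c d) as [e2 [? [? ?]]]; auto.
  destruct (min2 e1 e2) as [e [? [? ?]]]; auto.
  exists e; repeat split; lra.
Qed.

Definition seg {G : Type} (E : nat -> R -> G) (j : nat) (lo hi : R) (q : G) : Prop :=
  exists u, lo < u < hi /\ 0 < u < 1 /\ E j u = q.

Section G1.
Lemma seg_open (X : Type) (dX : X -> X -> R) (G : Type) (pi : X -> G)
  (V0 : list G) (m : nat) (E : nat -> R -> G) (Hfin : finite_graph dX pi V0 m E)
  j lo hi : (j < m)%nat -> openG dX pi (seg E j lo hi).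
Proof.
  destruct Hfin as [Hends [Hint [Hcov [Hinj Htop]]]].
  intros Hj. apply Htop. intros j' Hj' t Ht [u [Hu [Hu01 Heq]]].
  destruct (Rle_lt_or_eq_dec 0 t (proj1 Ht)) as [Ht0|Ht0].
  2:{ exfalso. destruct (Hends j' Hj') as [H0 _]. rewrite Ht0, <- Heq in H0. exact (Hint j u Hj Hu01 H0). }
  destruct (Rle_lt_or_eq_dec t 1 (proj2 Ht)) as [Ht1|Ht1].
  2:{ exfalso. destruct (Hends j' Hj') as [_ H0]. rewrite <- Ht1, <- Heq in H0. exact (Hint j u Hj Hu01 H0). }
  destruct (Hinj j j' u t Hj Hj' Hu01 (conj Ht0 Ht1) Heq) as [<- <-].
  destruct (min4 (u - lo) (hi - u) u (1 - u)) as [e [He [? [? [? ?]]]]]; try lra.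
  exists e; split; auto. intros s Hs Hsu. apply Rabs_lt_between' in Hsu.
  exists s; repeat split; lra.
Qed.

Lemma seg_closure (X : Type) (dX : X -> X -> R) (G : Type) (pi : X -> G)
  (V0 : list G) (m : nat) (E : nat -> R -> G) (Hfin : finite_graph dX pi V0 m E)
  j lo hi u : (j < m)%nat -> 0 <= lo -> lo < hi -> hi <= 1 -> lo <= u <= hi ->
  closureG dX pi (seg E j lo hi) (E j u).
Proof.
  destruct Hfin as [Hends [Hint [Hcov [Hinj Htop]]]].
  intros Hj H1 H2 H3 Hu U HU HUu.
  destruct (proj1 (Htop U) HU j Hj u ltac:(lra) HUu) as [d [Hd Hd2]].
  destruct (Rlt_dec u hi) as [Hlt|Hge].
  - destruct (min2 (d/2) ((hi - u)/2)) as [e [He [? ?]]]; try lra.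
    exists (E j (u + e)); split.
    + apply Hd2; [lra|]. apply Rabs_lt_between'; lra.
    + exists (u + e); repeat split; lra.
  - destruct (min2 (d/2) ((hi - lo)/2)) as [e [He [? ?]]]; try lra.
    exists (E j (u - e)); split.
    + apply Hd2; [lra|]. apply Rabs_lt_between'; lra.
    + exists (u - e); repeat split; lra.
Qed.

Lemma seg_connected (X : Type) (dX : X -> X -> R) (G : Type) (pi : X -> G)
  (V0 : list G) (m : nat) (E : nat -> R -> G) (Hfin : finite_graph dX pi V0 m E)
  j lo hi : (j < m)%nat -> 0 <= lo -> lo < hi -> hi <= 1 ->
  connectedG dX pi (seg E j lo hi).
Proof.
  pose proof Hfin as Hfin'.
  destruct Hfin as [Hends [Hint [Hcov [Hinj Htop]]]].
  intros Hj H1 H2 H3 [U [W [HU [HW [Hc [[p1 [Hp1 Up1]] [[p2 [Hp2 Wp2]] Hd]]]]]]].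
  destruct Hp1 as [a [Ha [Ha01 <-]]]. destruct Hp2 as [b [Hb [Hb01 <-]]].
  apply (interval_conn (fun s => U (E j s)) (fun s => W (E j s)) lo hi a b); auto.
  - intros s Hs. apply Hc. exists s; repeat split; lra.
  - intros s Hs. apply Hd. exists s; repeat split; lra.
  - intros s Hs Us. destruct (proj1 (Htop U) HU j Hj s ltac:(lra) Us) as [d [Hd0 Hd2]].
    exists d; split; auto. intros u Hu Hus; apply Hd2; auto; lra.
  - intros s Hs Us. destruct (proj1 (Htop W) HW j Hj s ltac:(lra) Us) as [d [Hd0 Hd2]].
    exists d; split; auto. intros u Hu Hus; apply Hd2; auto; lra.
Qed.

Lemma same_edge_seg (X : Type) (dX : X -> X -> R) (G : Type) (pi : X -> G)
  (V0 : list G) (m : nat) (E : nat -> R -> G) (Hfin : finite_graph dX pi V0 m E)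
  (Vs : G -> Prop) j lo hi u1 u2 : (j < m)%nat -> 0 <= lo -> lo < hi -> hi <= 1 ->
  (forall q, seg E j lo hi q -> ~ Vs q) -> lo <= u1 <= hi -> lo <= u2 <= hi ->
  same_edge dX pi Vs (E j u1) (E j u2).
Proof.
  intros Hj H1 H2 H3 HV Hu1 Hu2.
  set (T := seg E j lo hi).
  assert (HTc : connectedG dX pi T) by (apply (seg_connected X dX G pi V0 m E Hfin); auto).
  set (t0 := E j ((lo + hi)/2)).
  assert (Tt0 : T t0) by (exists ((lo+hi)/2); repeat split; lra).
  set (C := fun z => exists K, connectedG dX pi K /\ (forall w, K w -> ~ Vs w) /\
                               (forall w, T w -> K w) /\ K z).
  assert (TC : forall w, T w -> C w) by (intros w Tw; exists T; repeat split; auto).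
  exists C; split; [|split].
  - split; [exists t0; auto|split; [|split]].
    + intros p [K [_ [HK [_ Kp]]]]; auto.
    + intros [U [W [HU [HW [Hc [[p1 [Cp1 Up1]] [[p2 [Cp2 Wp2]] Hd]]]]]]].
      destruct (Hc t0 (TC t0 Tt0)) as [Ut|Wt].
      * destruct Cp2 as [K [HK [KV [TK Kp]]]]. apply HK.
        exists U, W; split; [auto|split; [auto|split; [|split; [|split]]]].
        -- intros p Kp'; apply Hc; exists K; repeat split; auto.
        -- exists t0; auto.
        -- exists p2; auto.
        -- intros p Kp'; apply Hd; exists K; repeat split; auto.
      * destruct Cp1 as [K [HK [KV [TK Kp]]]]. apply HK.
        exists U, W; split; [auto|split; [auto|split; [|split; [|split]]]].
        -- intros p Kp'; apply Hc; exists K; repeat split; auto.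
        -- exists p1; auto.
        -- exists t0; auto.
        -- intros p Kp'; apply Hd; exists K; repeat split; auto.
    + intros C' HCC' HC'V HC'c p C'p. exists C'; repeat split; auto.
  - intros U HU HUu. destruct (seg_closure X dX G pi V0 m E Hfin j lo hi u1 Hj H1 H2 H3 Hu1 U HU HUu) as [q [Uq Tq]].
    exists q; auto.
  - intros U HU HUu. destruct (seg_closure X dX G pi V0 m E Hfin j lo hi u2 Hj H1 H2 H3 Hu2 U HU HUu) as [q [Uq Tq]].
    exists q; auto.
Qed.
End G1.

Ltac absr := unfold Rabs in *; repeat match goal with |- context [Rcase_abs ?x] => destruct (Rcase_abs x) | H : context [Rcase_abs ?x] |- _ => destruct (Rcase_abs x) end; lra.

Lemma lip (X : Type) (dX : X -> X -> R) (Hmet : is_metric dX) r x y :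
  Rabs (dX r y - dX r x) <= dX x y.
Proof.
  destruct Hmet as [H0 [Heq [Hsym Htri]]].
  pose proof (Htri r x y). pose proof (Htri r y x). rewrite (Hsym y x) in *.
  absr.
Qed.

Lemma open_level (X : Type) (dX : X -> X -> R) (Hmet : is_metric dX) (G : Type) (pi : X -> G)
  r (dstar : G -> R) (Hdstar : forall x, dstar (pi x) = dX r x) v eps :
  openG dX pi (fun q => Rabs (dstar q - v) < eps).
Proof.
  intros x Hx. simpl in Hx. rewrite Hdstar in Hx.
  exists (eps - Rabs (dX r x - v)); split; [lra|].
  intros y Hy. simpl. rewrite Hdstar. pose proof (lip X dX Hmet r x y). absr.
Qed.

Lemma h_cont (X : Type) (dX : X -> X -> R) (Hmet : is_metric dX) (G : Type) (pi : X -> G)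
  (V0 : list G) (m : nat) (E : nat -> R -> G) (Hfin : finite_graph dX pi V0 m E)
  r (dstar : G -> R) (Hdstar : forall x, dstar (pi x) = dX r x) j c :
  (j < m)%nat -> 0 < c < 1 -> continuity_pt (fun u => dstar (E j u)) c.
Proof.
  destruct Hfin as [Hends [Hint [Hcov [Hinj Htop]]]].
  intros Hj Hc. unfold continuity_pt, continue_in, limit1_in, limit_in. simpl.
  intros eps Heps.
  pose proof (open_level X dX Hmet G pi r dstar Hdstar (dstar (E j c)) eps) as HO.
  destruct (proj1 (Htop _) HO j Hj c ltac:(lra)) as [d [Hd Hd2]].
  { simpl. unfold Rminus; rewrite Rplus_opp_r, Rabs_R0; auto. }
  destruct (min4 d c (1 - c) 1) as [e [He [? [? [? ?]]]]]; try lra.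
  exists e; split; auto. intros x [_ Hx]. unfold R_dist in *.
  apply Rabs_lt_between' in Hx.
  apply (Hd2 x); [lra|]. apply Rabs_lt_between'; lra.
Qed.

Lemma NLM (X : Type) (dX : X -> X -> R) (Hmet : is_metric dX) (Hgeo : geodesicX dX)
  (G : Type) (pi : X -> G) (Hsurj : forall p : G, exists x, pi x = p)
  (V0 : list G) (m : nat) (E : nat -> R -> G) (Hfin : finite_graph dX pi V0 m E)
  r (dstar : G -> R) (Hdstar : forall x, dstar (pi x) = dX r x) j s0 eps :
  (j < m)%nat -> 0 < s0 < 1 -> E j s0 <> pi r -> 0 < eps ->
  (forall u, 0 < u < 1 -> Rabs (u - s0) < eps -> dstar (E j s0) <= dstar (E j u)) -> False.
Proof.
  intros Hj Hs0 Hr He Hmin.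
  pose proof Hmet as [H0 [Heq [Hsym Htri]]].
  destruct (Hsurj (E j s0)) as [x0 Hx0].
  assert (Hop := seg_open X dX G pi V0 m E Hfin j (s0 - eps) (s0 + eps) Hj).
  destruct (Hop x0) as [eta [Heta Hball]].
  { exists s0; repeat split; auto; lra. }
  assert (Hxr : x0 <> r) by (intro; subst; auto).
  set (D := dX x0 r).
  assert (HD : 0 < D).
  { destruct (Rle_lt_or_eq_dec 0 D (H0 x0 r)) as [|HD]; auto.
    exfalso; apply Hxr, Heq; unfold D in HD; auto. }
  destruct (Hgeo x0 r) as [g [Hg0 [HgD Hg]]]. fold D in Hg, HgD.
  destruct (min2 (eta/2) (D/2)) as [u [Hu [Hu1 Hu2]]]; try lra.
  assert (Hd1 : dX x0 (g u) = u).
  { rewrite <- Hg0 at 1. rewrite Hg by lra. absr. }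
  destruct (Hball (g u)) as [s [Hs [Hs01 Hes]]]; [lra|].
  specialize (Hmin s Hs01 ltac:(apply Rabs_lt_between'; lra)).
  rewrite Hes, <- Hx0, !Hdstar in Hmin.
  assert (dX r (g u) = D - u).
  { rewrite <- HgD at 1. rewrite Hg by lra. absr. }
  assert (dX r x0 = D) by (unfold D; auto).
  lra.
Qed.

Definition LM1 {G : Type} (dstar : G -> R) (E : nat -> R -> G) j s :=
  exists d, 0 < d /\ forall u, 0 <= u <= 1 -> Rabs (u - s) < d -> dstar (E j u) <= dstar (E j s).

Lemma two_max (X : Type) (dX : X -> X -> R) (Hmet : is_metric dX) (Hgeo : geodesicX dX)
  (G : Type) (pi : X -> G) (Hsurj : forall p : G, exists x, pi x = p)
  (V0 : list G) (m : nat) (E : nat -> R -> G) (Hfin : finite_graph dX pi V0 m E)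
  r (dstar : G -> R) (Hdstar : forall x, dstar (pi x) = dX r x) j a b :
  (j < m)%nat -> 0 < a -> a < b -> b < 1 -> LM1 dstar E j a -> LM1 dstar E j b ->
  (forall u, a <= u <= b -> E j u <> pi r) -> False.
Proof.
  intros Hj Ha Hab Hb [da [Hda Hma]] [db [Hdb Hmb]] Hr.
  set (h := fun u => dstar (E j u)).
  destruct (continuity_ab_min h a b ltac:(lra)) as [c [Hc Hcab]].
  { intros c Hc. apply (h_cont X dX Hmet G pi V0 m E Hfin r dstar Hdstar); auto; lra. }
  unfold h in Hc.
  pose (nlm := NLM X dX Hmet Hgeo G pi Hsurj V0 m E Hfin r dstar Hdstar j).
  destruct (Req_dec c a) as [->|Hca].
  - destruct (min2 da (b - a)) as [e [He [? ?]]]; try lra.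
    assert (Hconst : forall u, a <= u < a + e -> dstar (E j u) = dstar (E j a)).
    { intros u Hu. apply Rle_antisym; [apply Hma; [lra|apply Rabs_lt_between'; lra]|apply Hc; lra]. }
    apply (nlm (a + e/2) (e/2)); auto; try lra.
    + apply Hr; lra.
    + intros u Hu Hue. apply Rabs_lt_between' in Hue.
      rewrite (Hconst u) by lra. rewrite (Hconst (a + e/2)) by lra. lra.
  - destruct (Req_dec c b) as [->|Hcb].
    + destruct (min2 db (b - a)) as [e [He [? ?]]]; try lra.
      assert (Hconst : forall u, b - e < u <= b -> dstar (E j u) = dstar (E j b)).
      { intros u Hu. apply Rle_antisym; [apply Hmb; [lra|apply Rabs_lt_between'; lra]|apply Hc; lra]. }
      apply (nlm (b - e/2) (e/2)); auto; try lra.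
      * apply Hr; lra.
      * intros u Hu Hue. apply Rabs_lt_between' in Hue.
        rewrite (Hconst u) by lra. rewrite (Hconst (b - e/2)) by lra. lra.
    + destruct (min2 (c - a) (b - c)) as [e [He [? ?]]]; try lra.
      apply (nlm c e); [auto|lra|exact (Hr c ltac:(lra))|lra|].
      intros u Hu Hue. apply Rabs_lt_between' in Hue. apply Hc; lra.
Qed.

Lemma lmG_LM1 (X : Type) (dX : X -> X -> R) (G : Type) (pi : X -> G)
  (V0 : list G) (m : nat) (E : nat -> R -> G) (Hfin : finite_graph dX pi V0 m E)
  (dstar : G -> R) j s : (j < m)%nat -> 0 <= s <= 1 ->
  local_maxG dX pi dstar (E j s) -> LM1 dstar E j s.
Proof.
  destruct Hfin as [Hends [Hint [Hcov [Hinj Htop]]]].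
  intros Hj Hs [U [HU [HUp HUm]]].
  destruct (proj1 (Htop U) HU j Hj s Hs HUp) as [d [Hd Hd2]].
  exists d; split; [auto|]. intros u Hu Hud. apply HUm, Hd2; auto.
Qed.

Lemma abs_cases x : (x < 0 /\ Rabs x = - x) \/ (0 <= x /\ Rabs x = x).
Proof. unfold Rabs; destruct (Rcase_abs x); [left|right]; split; lra. Qed.

Lemma Vint (X : Type) (dX : X -> X -> R) (G : Type) (pi : X -> G)
  (V0 : list G) (m : nat) (E : nat -> R -> G) (Hfin : finite_graph dX pi V0 m E)
  r (dstar : G -> R) j s : (j < m)%nat -> 0 < s < 1 ->
  vertexG dX pi V0 m E dstar r (E j s) -> local_maxG dX pi dstar (E j s) \/ E j s = pi r.
Proof.
  destruct Hfin as [Hends [Hint [Hcov [Hinj Htop]]]].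
  intros Hj Hs [Hd|[Hl|Hr]]; auto.
  exfalso; apply Hd; left; apply Hint; auto.
Qed.

Lemma isolation (X : Type) (dX : X -> X -> R) (Hmet : is_metric dX) (Hgeo : geodesicX dX)
  (G : Type) (pi : X -> G) (Hsurj : forall p : G, exists x, pi x = p)
  (V0 : list G) (m : nat) (E : nat -> R -> G) (Hfin : finite_graph dX pi V0 m E)
  r (dstar : G -> R) (Hdstar : forall x, dstar (pi x) = dX r x) j s0 :
  (j < m)%nat -> 0 <= s0 <= 1 ->
  exists eps, 0 < eps /\ forall s, 0 < s < 1 -> s <> s0 -> Rabs (s - s0) < eps ->
    ~ vertexG dX pi V0 m E dstar r (E j s).
Proof.
  intros Hj Hs0.
  pose proof Hfin as [Hends [Hint [Hcov [Hinj Htop]]]].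
  assert (R0 : exists e0, 0 < e0 /\ forall s, 0 < s < 1 -> s <> s0 -> Rabs (s - s0) < e0 -> E j s <> pi r).
  { destruct (classic (exists s1, 0 < s1 < 1 /\ s1 <> s0 /\ E j s1 = pi r)) as [[s1 [H1 [H2 H3]]]|Hn].
    - exists (Rabs (s1 - s0)); split; [apply Rabs_pos_lt; lra|].
      intros s Hs Hss Hd Heq. rewrite <- H3 in Heq.
      destruct (Hinj j j s s1 Hj Hj Hs H1 Heq) as [_ ->]. lra.
    - exists 1; split; [lra|]. intros s Hs Hss _ Heq. apply Hn; exists s; auto. }
  destruct R0 as [e0 [He0 R0]].
  apply NNPP; intro Hno.
  assert (bad : forall e, 0 < e -> exists s, 0 < s < 1 /\ s <> s0 /\ Rabs (s - s0) < e /\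
                    vertexG dX pi V0 m E dstar r (E j s)).
  { intros e He. apply NNPP; intro Hn. apply Hno. exists e; split; auto.
    intros s Hs Hss Hd HV. apply Hn; exists s; auto. }
  assert (LM : forall s, 0 < s < 1 -> s <> s0 -> Rabs (s - s0) < e0 ->
                 vertexG dX pi V0 m E dstar r (E j s) -> LM1 dstar E j s).
  { intros s Hs Hss Hd HV.
    destruct (Vint X dX G pi V0 m E Hfin r dstar j s Hj Hs HV) as [Hl|Hr].
    - apply (lmG_LM1 X dX G pi V0 m E Hfin); auto; lra.
    - exfalso; exact (R0 s Hs Hss Hd Hr). }
  assert (SS : forall x y, LM1 dstar E j x -> LM1 dstar E j y -> 0 < x < 1 -> 0 < y < 1 ->
                 s0 - e0 < x < s0 + e0 -> (s0 < y < x \/ x < y < s0) -> False).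
  { intros x y Lx Ly Hx Hy Hxe [Hxy|Hxy].
    - apply (two_max X dX Hmet Hgeo G pi Hsurj V0 m E Hfin r dstar Hdstar j y x); auto; try lra.
      intros u Hu. apply R0; try lra. apply Rabs_lt_between'; lra.
    - apply (two_max X dX Hmet Hgeo G pi Hsurj V0 m E Hfin r dstar Hdstar j x y); auto; try lra.
      intros u Hu. apply R0; try lra. apply Rabs_lt_between'; lra. }
  destruct (bad e0 He0) as [s1 [H1a [H1b [H1c H1d]]]].
  pose proof (LM s1 H1a H1b H1c H1d) as L1.
  destruct (bad (Rabs (s1 - s0))) as [s2 [H2a [H2b [H2c H2d]]]]; [apply Rabs_pos_lt; lra|].
  pose proof (LM s2 H2a H2b ltac:(lra) H2d) as L2.
  destruct (bad (Rabs (s2 - s0))) as [s3 [H3a [H3b [H3c H3d]]]]; [apply Rabs_pos_lt; lra|].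
  pose proof (LM s3 H3a H3b ltac:(lra) H3d) as L3.
  destruct (abs_cases (s1 - s0)) as [[? E1]|[? E1]]; rewrite E1 in *;
  destruct (abs_cases (s2 - s0)) as [[? E2]|[? E2]]; rewrite E2 in *;
  destruct (abs_cases (s3 - s0)) as [[? E3]|[? E3]]; rewrite E3 in *;
  first [ apply (SS s1 s2 L1 L2); [lra|lra|lra|first [left; lra | right; lra]]
        | apply (SS s1 s3 L1 L3); [lra|lra|lra|first [left; lra | right; lra]]
        | apply (SS s2 s3 L2 L3); [lra|lra|lra|first [left; lra | right; lra]] ].
Qed.

Lemma fin_eps (m : nat) (Q : nat -> R -> Prop) :
  (forall j e e', Q j e -> 0 < e' -> e' <= e -> Q j e') ->
  (forall j, (j < m)%nat -> exists e, 0 < e /\ Q j e) ->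
  exists e, 0 < e /\ forall j, (j < m)%nat -> Q j e.
Proof.
  intros Hmono. induction m as [|m IH]; intros H.
  - exists 1; split; [lra|]. intros j Hj; inversion Hj.
  - destruct IH as [e1 [He1 Q1]]. { intros j Hj; apply H; lia. }
    destruct (H m (PeanoNat.Nat.lt_succ_diag_r m)) as [e2 [He2 Q2]].
    destruct (min2 e1 e2) as [e [He [? ?]]]; auto.
    exists e; split; [auto|]. intros j Hj.
    destruct (PeanoNat.Nat.eq_dec j m) as [->|Hne].
    + apply (Hmono m e2); auto.
    + apply (Hmono j e1); auto. apply Q1. lia.
Qed.

Lemma NB (X : Type) (dX : X -> X -> R) (Hmet : is_metric dX) (Hgeo : geodesicX dX)
  (G : Type) (pi : X -> G) (Hsurj : forall p : G, exists x, pi x = p)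
  (V0 : list G) (m : nat) (E : nat -> R -> G) (Hfin : finite_graph dX pi V0 m E)
  r (dstar : G -> R) (Hdstar : forall x, dstar (pi x) = dX r x) (p : G) :
  exists W, openG dX pi W /\ W p /\ forall q, W q -> q = p \/
     same_edge dX pi (vertexG dX pi V0 m E dstar r) p q.
Proof.
  pose proof Hfin as [Hends [Hint [Hcov [Hinj Htop]]]].
  set (Vs := vertexG dX pi V0 m E dstar r).
  pose (iso := isolation X dX Hmet Hgeo G pi Hsurj V0 m E Hfin r dstar Hdstar).
  destruct (classic (In p V0)) as [HpV|HpV].
  - set (Q := fun j e => (forall s, 0 < s < 1 -> s < e -> ~ Vs (E j s)) /\
                         (forall s, 0 < s < 1 -> 1 - e < s -> ~ Vs (E j s))).
    destruct (fin_eps m Q) as [e [He HQ]].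
    { intros j e0 e' [Qa Qb] He' Hle; split; intros s Hs Hse; [apply Qa|apply Qb]; auto; lra. }
    { intros j Hj.
      destruct (iso j 0 Hj ltac:(lra)) as [e1 [He1 I1]].
      destruct (iso j 1 Hj ltac:(lra)) as [e2 [He2 I2]].
      destruct (min2 e1 e2) as [e [He [? ?]]]; auto.
      exists e; split; auto; split; intros s Hs Hse.
      - apply I1; try lra. apply Rabs_lt_between'; lra.
      - apply I2; try lra. apply Rabs_lt_between'; lra. }
    set (W := fun q => q = p \/ exists j s, (j < m)%nat /\ 0 < s < 1 /\ E j s = q /\
                 ((E j 0 = p /\ s < e) \/ (E j 1 = p /\ 1 - e < s))).
    exists W; split; [|split].
    + apply Htop. intros j' Hj' t Ht [Heq|[j0 [s [Hj0 [Hs [Heq Hc]]]]]].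
      * destruct (Rle_lt_or_eq_dec 0 t (proj1 Ht)) as [Ht0|Ht0].
        -- destruct (Rle_lt_or_eq_dec t 1 (proj2 Ht)) as [Ht1|Ht1].
           ++ exfalso; apply (Hint j' t Hj' (conj Ht0 Ht1)); rewrite Heq; auto.
           ++ subst t. destruct (min2 e 1) as [d [Hd [? ?]]]; auto; try lra.
              exists d; split; auto. intros u Hu Hud. apply Rabs_lt_between' in Hud.
              destruct (Req_dec u 1) as [->|Hu1]; [left; auto|].
              right; exists j', u; split; [auto|split; [lra|split; [auto|right; split; [auto|lra]]]].
        -- subst t. destruct (min2 e 1) as [d [Hd [? ?]]]; auto; try lra.
           exists d; split; auto. intros u Hu Hud. apply Rabs_lt_between' in Hud.
           destruct (Req_dec u 0) as [->|Hu1]; [left; auto|].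
           right; exists j', u; split; [auto|split; [lra|split; [auto|left; split; [auto|lra]]]].
      * assert (Ht' : 0 < t < 1).
        { destruct (Rle_lt_or_eq_dec 0 t (proj1 Ht)) as [Ht0|Ht0].
          - destruct (Rle_lt_or_eq_dec t 1 (proj2 Ht)) as [Ht1|Ht1]; [lra|].
            exfalso. destruct (Hends j' Hj') as [_ H1]. rewrite <- Ht1, <- Heq in H1.
            exact (Hint j0 s Hj0 Hs H1).
          - exfalso. destruct (Hends j' Hj') as [H1 _]. rewrite Ht0, <- Heq in H1.
            exact (Hint j0 s Hj0 Hs H1). }
        destruct (Hinj j0 j' s t Hj0 Hj' Hs Ht' Heq) as [<- <-].
        destruct Hc as [[Hc1 Hc2]|[Hc1 Hc2]].
        -- destruct (min4 s (1 - s) (e - s) 1) as [d [Hd [? [? [? ?]]]]]; try lra.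
           exists d; split; auto. intros u Hu Hud. apply Rabs_lt_between' in Hud.
           right; exists j0, u; split; [auto|split; [lra|split; [auto|left; split; [auto|lra]]]].
        -- destruct (min4 s (1 - s) (s - (1 - e)) 1) as [d [Hd [? [? [? ?]]]]]; try lra.
           exists d; split; auto. intros u Hu Hud. apply Rabs_lt_between' in Hud.
           right; exists j0, u; split; [auto|split; [lra|split; [auto|right; split; [auto|lra]]]].
    + left; auto.
    + intros q [Hq|[j [s [Hj [Hs [<- Hc]]]]]]; [left; auto|right].
      destruct (HQ j Hj) as [Qa Qb].
      destruct Hc as [[<- Hc2]|[<- Hc2]].
      * apply (same_edge_seg X dX G pi V0 m E Hfin Vs j 0 s); auto; try lra.
        intros q [w [Hw [Hw01 <-]]]. apply Qa; auto; lra.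
      * apply (same_edge_seg X dX G pi V0 m E Hfin Vs j s 1); auto; try lra.
        intros q [w [Hw [Hw01 <-]]]. apply Qb; auto; lra.
  - destruct (Hcov p HpV) as [j [s0 [Hj [Hs0 <-]]]].
    destruct (iso j s0 Hj ltac:(lra)) as [eps [Heps I]].
    destruct (min4 eps s0 (1 - s0) 1) as [e [He [? [? [? ?]]]]]; try lra.
    exists (seg E j (s0 - e) (s0 + e)); split; [|split].
    + apply (seg_open X dX G pi V0 m E Hfin); auto.
    + exists s0; repeat split; auto; lra.
    + intros q [u [Hu [Hu01 <-]]].
      destruct (Rtotal_order u s0) as [Hlt|[->|Hgt]].
      * right. apply (same_edge_seg X dX G pi V0 m E Hfin Vs j u s0); auto; try lra.
        intros q [w [Hw [Hw01 <-]]]. apply I; auto; try lra. apply Rabs_lt_between'; lra.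
      * left; auto.
      * right. apply (same_edge_seg X dX G pi V0 m E Hfin Vs j s0 u); auto; try lra.
        intros q [w [Hw [Hw01 <-]]]. apply I; auto; try lra. apply Rabs_lt_between'; lra.
Qed.

Lemma last_cons_eq {G : Type} (l : list G) a p : last (a :: l) p = last l a.
Proof.
  assert (K : forall (l : list G) p q, l <> nil -> last l p = last l q).
  { induction l0 as [|b l0 IH]; intros p0 q0 H; [congruence|].
    destruct l0 as [|c l0]; [reflexivity|]. apply (IH p0 q0). discriminate. }
  destruct l as [|b l]; [reflexivity|]. change (last (b :: l) p = last (b :: l) a). apply K; discriminate.
Qed.

Lemma chain_adm_app {G : Type} (Rel : G -> G -> Prop) p l q :
  chain_adm Rel p l -> Rel (last l p) q -> chain_adm Rel p (l ++ q :: nil).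
Proof.
  revert p; induction l as [|a l IH]; intros p H1 H2; [simpl in *; tauto|].
  rewrite last_cons_eq in H2. simpl in H1. destruct H1 as [Hpa Hl].
  simpl. split; auto.
Qed.

Lemma chain_len_app {G : Type} (ds : G -> R) p l q :
  chain_len ds p (l ++ q :: nil) = chain_len ds p l + Rabs (ds (last l p) - ds q).
Proof.
  revert p; induction l as [|a l IH]; intros p; [simpl; ring|].
  cbn [app chain_len]. rewrite IH, last_cons_eq. ring.
Qed.

Lemma last_app1 {G : Type} (l : list G) p q : last (l ++ q :: nil) p = q.
Proof. revert p; induction l as [|a l IH]; intros p; auto. cbn [app]. rewrite last_cons_eq. apply IH. Qed.

Lemma same_edge_sym (X : Type) (dX : X -> X -> R) (G : Type) (pi : X -> G) Vs (p q : G) :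
  same_edge dX pi Vs p q -> same_edge dX pi Vs q p.
Proof. intros [C [H1 [H2 H3]]]; exists C; auto. Qed.

Theorem lemma5
  (X : Type) (dX : X -> X -> R)
  (Hmet : is_metric dX) (Hcpt : compactX dX) (Hgeo : geodesicX dX)
  (r : X)
  (G : Type) (pi : X -> G) (Hsurj : forall p : G, exists x, pi x = p)
  (dstar : G -> R) (Hdstar : forall x, dstar (pi x) = dX r x)
  (HG : (forall x y, pi x = pi y <-> reeb_rel dX (fun z => dX r z) x y) \/
        (exists (alpha : R) (I : Type) (a b : I -> R),
           0 < alpha /\ alpha_cover (fun z => dX r z) alpha a b /\
           forall x y, pi x = pi y <-> alpha_rel dX (fun z => dX r z) a b x y))
  (V0 : list G) (m : nat) (E : nat -> R -> G)
  (Hfin : finite_graph dX pi V0 m E) :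
  forall x y : X,
    Rbar_le (dG dX pi (vertexG dX pi V0 m E dstar r) dstar (pi x) (pi y)) (Finite (dX x y)).
Proof.
  intros x y.
  set (Vs := vertexG dX pi V0 m E dstar r).
  destruct (Hgeo x y) as [g [Hg0 [HgD Hg]]].
  set (D := dX x y) in *.
  assert (HD : 0 <= D) by (apply (proj1 Hmet)).
  set (P := fun t => exists l, chain_adm (same_edge dX pi Vs) (pi x) l /\
                     last l (pi x) = pi (g t) /\ chain_len dstar (pi x) l <= t).
  assert (Step : forall s t, 0 <= s -> s <= t -> t <= D -> P s ->
            (pi (g s) = pi (g t) \/ same_edge dX pi Vs (pi (g s)) (pi (g t))) -> P t).
  { intros s t H1 H2 H3 [l [Hadm [Hlast Hlen]]] [Heq|Hse].
    - exists l; repeat split; auto; [congruence|lra].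
    - exists (l ++ pi (g t) :: nil); split; [|split].
      + apply chain_adm_app; auto. rewrite Hlast; auto.
      + apply last_app1.
      + rewrite chain_len_app, Hlast, !Hdstar.
        pose proof (lip X dX Hmet r (g s) (g t)).
        rewrite Hg in H by lra. rewrite Rabs_minus_sym in H.
        replace (Rabs (s - t)) with (t - s) in H by absr. lra. }
  assert (Loc : forall t, 0 <= t <= D -> exists eta, 0 < eta /\ forall s, 0 <= s <= D ->
            Rabs (s - t) < eta -> pi (g s) = pi (g t) \/ same_edge dX pi Vs (pi (g t)) (pi (g s))).
  { intros t Ht.
    destruct (NB X dX Hmet Hgeo G pi Hsurj V0 m E Hfin r dstar Hdstar (pi (g t))) as [W [HW [HWp HWq]]].
    destruct (HW (g t) HWp) as [eta [Heta Hball]].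
    exists eta; split; auto. intros s Hs Hst.
    destruct (HWq (pi (g s))) as [Heq|Hse]; auto.
    apply Hball. rewrite Hg by lra. rewrite Rabs_minus_sym; auto. }
  set (S := fun s => 0 <= s <= D /\ P s).
  assert (HS0 : S 0).
  { split; [lra|]. exists nil; simpl; repeat split; [rewrite Hg0; auto|lra]. }
  assert (Hb : bound S) by (exists D; intros s [Hs _]; lra).
  destruct (completeness S Hb (ex_intro _ 0 HS0)) as [T [Hub Hlub]].
  assert (HT0 : 0 <= T) by (apply Hub; auto).
  assert (HTD : T <= D) by (apply Hlub; intros s [Hs _]; lra).
  destruct (Loc T (conj HT0 HTD)) as [eta [Heta HL]].
  assert (PT : P T).
  { destruct (classic (exists s, S s /\ T - eta < s)) as [[s [[Hs Ps] Hst]]|Hn].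
    - assert (s <= T) by (apply Hub; split; auto).
      apply (Step s T); auto; try lra.
      destruct (HL s Hs) as [Heq|Hse]; [apply Rabs_lt_between'; lra|left; auto|].
      right; apply same_edge_sym; auto.
    - exfalso. assert (T <= T - eta); [|lra].
      apply Hlub. intros s Hs. destruct (Rle_dec s (T - eta)); auto.
      exfalso; apply Hn; exists s; split; auto; lra. }
  assert (HTD' : T = D).
  { destruct (Req_dec T D) as [|Hne]; auto. exfalso.
    destruct (min2 (eta/2) (D - T)) as [e [He [? ?]]]; try lra.
    assert (S (T + e)); [|specialize (Hub _ H1); lra].
    split; [lra|]. apply (Step T (T + e)); auto; try lra.
    destruct (HL (T + e)) as [Heq|Hse]; [lra|apply Rabs_lt_between'; lra|left; auto|right; auto]. }
  subst T. destruct PT as [l [Hadm [Hlast Hlen]]].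
  unfold dG. destruct (Glb_Rbar_correct (fun L => exists l, chain_adm (same_edge dX pi Vs) (pi x) l /\
        last l (pi x) = pi y /\ L = chain_len dstar (pi x) l)) as [Hlb _].
  apply Rbar_le_trans with (Finite (chain_len dstar (pi x) l)).
  - apply Hlb. exists l; repeat split; auto. rewrite Hlast, HgD; auto.
  - simpl; lra.
Qed.
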